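(* Let $(\mathcal{E},\mathcal{L},\mathcal{B})$ be a weakly left resolving labelled space whose accommodating family $\mathcal{B}$ is closed under relative complements, and let $S$ be its associated inverse semigroup. A filter in $E(S)$ of infinite type is tight if and only if it is an ultrafilter.
   Context: A directed graph $\mathcal{E}=(\mathcal{E}^0,\mathcal{E}^1,r,s)$ has countable nonempty vertex set, edge set, range/source maps; paths satisfy $r(\lambda_i)=s(\lambda_{i+1})$. A labelled graph has a surjective labelling $\mathcal{L}:\mathcal{E}^1\to\mathcal{A}$ extended letterwise to finite and infinite paths. $\omega$ is the empty word, $\mathcal{L}^+=\bigcup_{n\ge1}\mathcal{L}(\mathcal{E}^n)$, $\mathcal{L}^*=\{\omega\}\cup\mathcal{L}^+$, $\mathcal{L}^\infty$ the labels of infinite paths. For $A\subseteq\mathcal{E}^0$, $\alpha\in\mathcal{L}^+$: $r(A,\alpha)=\{r(\lambda):\mathcal{L}(\lambda)=\alpha,\ s(\lambda)\in A\}$, $r(A,\omega)=A$, $r(\alpha)=r(\mathcal{E}^0,\alpha)$. $\mathcal{B}$ accommodating: closed under $r(\cdot,\alpha)$, finite intersections and unions, contains $r(\alpha)$ for $\alpha\in\mathcal{L}^+$; labelled space weakly left resolving if $r(A\cap B,\alpha)=r(A,\alpha)\cap r(B,\alpha)$ for $A,B\in\mathcal{B}$, $\alpha\in\mathcal{L}^+$. $\mathcal{B}_\alpha=\mathcal{B}\cap\mathcal{P}(r(\alpha))$. $S$ = triples $(\alpha,A,\beta)$, $\alpha,\beta\in\mathcal{L}^*$, $\emptyset\ne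 A\in\mathcal{B}_\alpha\cap\mathcal{B}_\beta$, plus $0$; product $(\alpha,A,\beta)(\gamma,B,\delta)=(\alpha\gamma',r(A,\gamma')\cap B,\delta)$ if $\gamma=\beta\gamma'$, $=(\alpha,A\cap r(B,\beta'),\delta\beta')$ if $\beta=\gamma\beta'$, $=0$ otherwise (empty middle entry identified with $0$). $E(S)=\{(\alpha,A,\alpha)\}\cup\{0\}$, $p\le q$ iff $pq=p$. A filter in a poset with least element $0$ is a nonempty upward-closed subset not containing $0$ in which any two elements have a common lower bound in it; an ultrafilter is a maximal filter. The words of elements of a filter $\xi$ in $E(S)$ are pairwise comparable; $\xi$ is of infinite type if there is no longest such word. For $x\in E(S)$, $Z\subseteq\{y:y\le x\}$ is a cover for $x$ if for every nonzero $y\le x$ there is $z\in Z$ with $zy\neq0$; a filter $\xi$ is tight if for every $x\in\xi$ and every finite cover $Z$ of $x$, $Z\cap\xi\neq\emptyset$. *)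

(* Defs.v *)
From Stdlib Require Import List Classical ClassicalEpsilon.
Import ListNotations.
Set Implicit Arguments.

Section LabelledSpace.
Context {V E Alph : Type} (rg src : E -> V) (L : E -> Alph).

Fixpoint path_from (v : V) (p : list E) (w : V) : Prop :=
  match p with
  | nil => v = w
  | e :: p' => src e = v /\ path_from (rg e) p' w
  end.

(* r(A, alpha); for alpha = omega (nil) this is A itself. *)
Definition rrel (A : V -> Prop) (alpha : list Alph) : V -> Prop :=
  fun w => exists v p, A v /\ path_from v p w /\ map L p = alpha.

Definition rword (alpha : list Alph) : V -> Prop := rrel (fun _ => True) alpha.

Definition Lplus (alpha : list Alph) : Prop :=
  alpha <> nil /\ exists v p w, path_from v p w /\ map L p = alpha.

Definition Lstar (alpha : list Alph) : Prop := alpha = nil \/ Lplus alpha.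

Definition setI (X Y : V -> Prop) : V -> Prop := fun v => X v /\ Y v.
Definition setU (X Y : V -> Prop) : V -> Prop := fun v => X v \/ Y v.
Definition setD (X Y : V -> Prop) : V -> Prop := fun v => X v /\ ~ Y v.
Definition subset (X Y : V -> Prop) : Prop := forall v, X v -> Y v.
Definition nonempty (X : V -> Prop) : Prop := exists v, X v.

Variable B : (V -> Prop) -> Prop.

Definition accommodating : Prop :=
  (forall X alpha, B X -> Lplus alpha -> B (rrel X alpha)) /\
  (forall X Y, B X -> B Y -> B (setI X Y)) /\
  (forall X Y, B X -> B Y -> B (setU X Y)) /\
  (forall alpha, Lplus alpha -> B (rword alpha)).

Definition weakly_left_resolving : Prop :=
  forall X Y alpha, B X -> B Y -> Lplus alpha ->
    rrel (setI X Y) alpha = setI (rrel X alpha) (rrel Y alpha).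

Definition closed_under_relative_complements : Prop :=
  forall X Y, B X -> B Y -> B (setD X Y).

Definition Balpha (alpha : list Alph) (X : V -> Prop) : Prop :=
  B X /\ subset X (rword alpha).

(* Raw elements of the semigroup S; membership is the predicate inS. *)
Inductive Sg : Type :=
| Zero : Sg
| Tri : list Alph -> (V -> Prop) -> list Alph -> Sg.

Definition inS (x : Sg) : Prop :=
  match x with
  | Zero => True
  | Tri a X b => Lstar a /\ Lstar b /\ nonempty X /\ Balpha a X /\ Balpha b X
  end.

(* a triple with empty middle entry is identified with 0 *)
Definition mk (a : list Alph) (X : V -> Prop) (b : list Alph) : Sg :=
  if excluded_middle_informative (nonempty X) then Tri a X b else Zero.

Definition mul (x y : Sg) : Sg :=
  match x, y with
  | Tri a X b, Tri c Y d =>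
      if excluded_middle_informative (exists c', c = b ++ c') then
        let c' := skipn (length b) c in mk (a ++ c') (setI (rrel X c') Y) d
      else if excluded_middle_informative (exists b', b = c ++ b') then
        let b' := skipn (length c) b in mk a (setI X (rrel Y b')) (d ++ b')
      else Zero
  | _, _ => Zero
  end.

Definition inES (x : Sg) : Prop :=
  inS x /\ (x = Zero \/ exists a X, x = Tri a X a).

Definition leS (x y : Sg) : Prop := mul x y = x.

Definition is_filter (xi : Sg -> Prop) : Prop :=
  (forall x, xi x -> inES x) /\
  (exists x, xi x) /\
  (forall x y, xi x -> inES y -> leS x y -> xi y) /\
  ~ xi Zero /\
  (forall x y, xi x -> xi y -> exists z, xi z /\ leS z x /\ leS z y).

Definition is_ultrafilter (xi : Sg -> Prop) : Prop :=
  is_filter xi /\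
  forall eta, is_filter eta -> (forall x, xi x -> eta x) -> forall x, eta x -> xi x.

Definition word (x : Sg) : list Alph :=
  match x with Zero => nil | Tri a _ _ => a end.

Definition infinite_type (xi : Sg -> Prop) : Prop :=
  forall x, xi x -> exists y, xi y /\ length (word x) < length (word y).

Definition is_cover (x : Sg) (Z : list Sg) : Prop :=
  (forall z, In z Z -> inES z /\ leS z x) /\
  (forall y, inES y -> y <> Zero -> leS y x ->
     exists z, In z Z /\ mul z y <> Zero).

Definition is_tight (xi : Sg -> Prop) : Prop :=
  is_filter xi /\
  forall x Z, xi x -> is_cover x Z -> exists z, In z Z /\ xi z.

End LabelledSpace.

Definition countable (T : Type) : Prop :=
  exists f : T -> nat, forall x y, f x = f y -> x = y.

(* Main.v *)
Require Import Defs.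
From Stdlib Require Import Lia List Classical ClassicalEpsilon FunctionalExtensionality PropExtensionality.
Import ListNotations.

Section Proof.
Context (V E Alph : Type) (rg src : E -> V) (L : E -> Alph) (B : (V -> Prop) -> Prop).
Hypothesis hacc : accommodating rg src L B.
Hypothesis hwlr : weakly_left_resolving rg src L B.
Hypothesis hcompl : closed_under_relative_complements B.

Local Notation RR := (rrel rg src L).
Local Notation S := (@Sg V Alph).
Local Notation M := (mul rg src L).
Local Notation LE := (leS rg src L).
Local Notation IES := (inES rg src L B).

Lemma pred_ext (X Y : V -> Prop) : (forall v, X v <-> Y v) -> X = Y.
Proof. intro H. apply functional_extensionality; intro v. apply propositional_extensionality; auto. Qed.

Lemma path_app v p1 p2 w : path_from rg src v (p1 ++ p2) w <-> exists u, path_from rg src v p1 u /\ path_from rg src u p2 w.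
Proof.
  revert v; induction p1 as [|e p1 IH]; intro v; simpl.
  - split. intro H; exists v; auto. intros [u [-> H]]; auto.
  - rewrite IH. split.
    + intros [H1 [u [H2 H3]]]. exists u; auto.
    + intros [u [[H1 H2] H3]]. split; auto. exists u; auto.
Qed.

Lemma rrel_nil X w : RR X nil w <-> X w.
Proof.
  split.
  - intros [v [p [Hv [Hp Hm]]]]. destruct p; [|discriminate]. simpl in Hp; subst; auto.
  - intro H. exists w, nil; simpl; auto.
Qed.

Lemma rrel_nil_eq X : RR X nil = X.
Proof. apply pred_ext; apply rrel_nil. Qed.

Lemma rrel_app X c d w : RR X (c ++ d) w <-> RR (RR X c) d w.
Proof.
  split.
  - intros [v [p [Hv [Hp Hm]]]]. destruct (map_eq_app _ _ _ _ Hm) as [p1 [p2 [-> [H1 H2]]]].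
    apply path_app in Hp. destruct Hp as [u [Hp1 Hp2]].
    exists u, p2. split; [|auto]. exists v, p1; auto.
  - intros [u [p2 [[v [p1 [Hv [Hp1 Hm1]]]] [Hp2 Hm2]]]].
    exists v, (p1 ++ p2). split; auto. split. apply path_app; eauto. rewrite map_app; congruence.
Qed.

Lemma rrel_mono X Y c : subset X Y -> subset (RR X c) (RR Y c).
Proof. intros H w [v [p [Hv Hp]]]. exists v, p; auto. Qed.

Lemma rrel_lplus X c w : RR X c w -> c <> nil -> Lplus rg src L c.
Proof. intros [v [p [Hv [Hp Hm]]]] Hc. split; auto. exists v, p, w; auto. Qed.

Lemma rrel_ne X c w : RR X c w -> nonempty X.
Proof. intros [v [p [Hv _]]]. exists v; auto. Qed.

Lemma B_rrel X c w : B X -> RR X c w -> B (RR X c).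
Proof.
  intros HX Hw. destruct c as [|a c].
  - rewrite rrel_nil_eq; auto.
  - apply (proj1 hacc); auto. eapply rrel_lplus; eauto. discriminate.
Qed.

Lemma B_setI X Y : B X -> B Y -> B (setI X Y).
Proof. apply hacc. Qed.

Lemma wlr_all X Y c w : B X -> B Y -> RR X c w -> RR Y c w -> RR (setI X Y) c w.
Proof.
  intros HX HY H1 H2. destruct c as [|a c].
  - apply rrel_nil. apply (proj1 (rrel_nil _ _)) in H1. apply (proj1 (rrel_nil _ _)) in H2. split; auto.
  - rewrite hwlr; auto. split; auto. eapply rrel_lplus; eauto. discriminate.
Qed.

Lemma skipn_len (a c : list Alph) : skipn (length a) (a ++ c) = c.
Proof. induction a; simpl; auto. Qed.

Lemma mk_ne a W b : nonempty W -> @mk V Alph a W b = Tri a W b.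
Proof. unfold mk; intro H; destruct (excluded_middle_informative _); tauto. Qed.
Lemma mk_e a W b : ~ nonempty W -> @mk V Alph a W b = Zero.
Proof. unfold mk; intro H; destruct (excluded_middle_informative _); tauto. Qed.

Lemma mul_case1 a b c X Y : b = a ++ c ->
  M (Tri a X a) (Tri b Y b) = mk (a ++ c) (setI (RR X c) Y) (a ++ c).
Proof.
  intros ->. unfold mul. destruct (excluded_middle_informative _) as [H|H].
  - cbv zeta. rewrite skipn_len. reflexivity.
  - exfalso; apply H; eauto.
Qed.

Lemma mul_case2 a b c X Y : a = b ++ c -> ~ (exists c', b = a ++ c') ->
  M (Tri a X a) (Tri b Y b) = mk (b ++ c) (setI (RR Y c) X) (b ++ c).
Proof.
  intros -> Hn. unfold mul. destruct (excluded_middle_informative _) as [H|_]; [contradiction|].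
  destruct (excluded_middle_informative _) as [H|H].
  - cbv zeta. rewrite skipn_len. f_equal. apply pred_ext; intro; unfold setI; tauto.
  - exfalso; apply H; eauto.
Qed.

Lemma mul_case3 a b X Y : ~ (exists c, b = a ++ c) -> ~ (exists c, a = b ++ c) ->
  M (Tri a X a) (Tri b Y b) = Zero.
Proof.
  intros H1 H2. unfold mul. destruct (excluded_middle_informative _) as [H|_]; [contradiction|].
  destruct (excluded_middle_informative _) as [H|_]; [contradiction|]. reflexivity.
Qed.

Lemma app_comp (a b e1 e2 : list Alph) : a ++ e1 = b ++ e2 -> (exists c, b = a ++ c) \/ (exists c, a = b ++ c).
Proof.
  revert b; induction a as [|x a IH]; intros b H.
  - left; exists b; auto.
  - destruct b as [|y b].
    + right; exists (x :: a); auto.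
    + simpl in H; injection H; intros H1 ->. destruct (IH b H1) as [[c ->]|[c ->]]; [left|right]; exists c; auto.
Qed.

Lemma app_nil_len (a c : list Alph) : a = a ++ c -> c = nil.
Proof. intro H. apply (f_equal (@length _)) in H. rewrite length_app in H. destruct c; simpl in *; auto; exfalso; lia. Qed.

Definition valid (a : list Alph) (X : V -> Prop) :=
  Lstar rg src L a /\ nonempty X /\ B X /\ subset X (rword rg src L a).

Lemma inES_cases (x : S) : IES x -> x = Zero \/ exists a X, x = Tri a X a /\ valid a X.
Proof.
  intros [Hs [->|[a [X ->]]]]; [left; auto|right].
  exists a, X; split; auto. destruct Hs as [H1 [_ [H3 [[H4 H5] _]]]]. unfold valid; auto.
Qed.

Lemma valid_inES a X : valid a X -> IES (Tri a X a).
Proof.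
  intros [H1 [H2 [H3 H4]]]. split.
  - simpl. unfold Balpha. tauto.
  - right; eauto.
Qed.

Lemma le_zero_l (p : S) : LE Zero p.
Proof. unfold leS; destruct p; reflexivity. Qed.

Lemma le_zero_r (p : S) : LE p Zero -> p = Zero.
Proof. unfold leS; destruct p as [|a X b]; intro H; auto. Qed.

Lemma leS_char a b X Y : nonempty X ->
  (LE (Tri a X a) (Tri b Y b) <-> exists d, a = b ++ d /\ subset X (RR Y d)).
Proof.
  intro HX. unfold leS. split.
  - intro H. destruct (classic (exists c, b = a ++ c)) as [[c Hc]|Hn1].
    + rewrite (mul_case1 _ _ _ _ _ Hc) in H.
      destruct (classic (nonempty (setI (RR X c) Y))) as [Hne|Hne];
        [rewrite mk_ne in H by auto | rewrite mk_e in H by auto; discriminate].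
      injection H as Ha HW _.
      assert (c = nil) by (apply (app_nil_len a); auto). subst c.
      exists nil. split. subst b; rewrite !app_nil_r; auto.
      intros v Hv. rewrite <- HW in Hv. destruct Hv as [_ Hy]. apply rrel_nil; auto.
    + destruct (classic (exists c, a = b ++ c)) as [[c Hc]|Hn2].
      * rewrite (mul_case2 _ _ _ _ _ Hc Hn1) in H.
        destruct (classic (nonempty (setI (RR Y c) X))) as [Hne|Hne];
          [rewrite mk_ne in H by auto | rewrite mk_e in H by auto; discriminate].
        injection H as Ha HW _.
        exists c; split; auto. intros v Hv. rewrite <- HW in Hv. destruct Hv; auto.
      * rewrite mul_case3 in H by auto. discriminate.
  - intros [d [Hd Hsub]]. destruct (classic (exists c, b = a ++ c)) as [[c Hc]|Hn1].
    + rewrite (mul_case1 _ _ _ _ _ Hc).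
      assert (Hcd : c ++ d = nil).
      { subst b. rewrite <- app_assoc in Hd. apply (app_nil_len a); auto. }
      apply app_eq_nil in Hcd. destruct Hcd; subst c d. rewrite app_nil_r.
      assert (HW : setI (RR X nil) Y = X).
      { apply pred_ext; intro v; unfold setI; split.
        - intros [H _]; apply rrel_nil; auto.
        - intro Hv; split; [apply rrel_nil; auto|]. apply (proj1 (rrel_nil _ _)); auto. }
      rewrite HW. apply mk_ne; auto.
    + rewrite (mul_case2 _ _ _ _ _ Hd Hn1). rewrite <- Hd.
      assert (HW : setI (RR Y d) X = X).
      { apply pred_ext; intro v; unfold setI; split; [tauto|]. intro; split; auto. }
      rewrite HW. apply mk_ne; auto.
Qed.

Lemma le_refl (p : S) : IES p -> LE p p.
Proof.
  intro H; destruct (inES_cases _ H) as [->|[a [X [-> [_ [Hne _]]]]]].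
  - apply le_zero_l.
  - apply leS_char; auto. exists nil; split; [rewrite app_nil_r; auto|].
    intros v Hv; apply rrel_nil; auto.
Qed.

Lemma le_trans (g p q : S) : IES g -> IES p -> IES q -> LE g p -> LE p q -> LE g q.
Proof.
  intros Hg Hp Hq H1 H2.
  destruct (inES_cases _ Hg) as [->|[d [Z [-> [_ [HZ _]]]]]]; [apply le_zero_l|].
  destruct (inES_cases _ Hp) as [->|[a [X [-> [_ [HX _]]]]]];
    [apply le_zero_r in H1; discriminate|].
  destruct (inES_cases _ Hq) as [->|[b [Y [-> [_ [HY _]]]]]];
    [apply le_zero_r in H2; discriminate|].
  apply leS_char in H1; auto. apply leS_char in H2; auto. apply leS_char; auto.
  destruct H1 as [e1 [-> S1]]. destruct H2 as [e2 [-> S2]].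
  exists (e2 ++ e1). split; [rewrite app_assoc; auto|].
  intros v Hv. apply rrel_app. eapply rrel_mono; eauto.
Qed.

Lemma lb d Z a X c Y : B X -> B Y -> nonempty Z ->
  LE (Tri d Z d) (Tri a X a) -> LE (Tri d Z d) (Tri (a ++ c) Y (a ++ c)) ->
  exists e, d = a ++ c ++ e /\ subset Z (RR (setI (RR X c) Y) e).
Proof.
  intros HX HY HZ H1 H2. apply leS_char in H1; auto. apply leS_char in H2; auto.
  destruct H1 as [e1 [Hd1 S1]]. destruct H2 as [e2 [Hd2 S2]].
  assert (He : e1 = c ++ e2).
  { apply (app_inv_head a). rewrite <- Hd1, Hd2, app_assoc; auto. }
  subst e1. exists e2. split; [rewrite Hd2, app_assoc; auto|].
  intros v Hv. pose proof (S1 v Hv) as h1. apply rrel_app in h1.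
  destruct (rrel_ne _ _ _ h1) as [w Hw].
  apply wlr_all; auto. eapply B_rrel; eauto.
Qed.

Lemma inES_zero : IES Zero.
Proof. split; [exact I | left; reflexivity]. Qed.

Section MeetTri.
Variables (a c : list Alph) (X Y : V -> Prop).
Hypothesis (hX : valid a X) (hY : valid (a ++ c) Y).
Let W := setI (RR X c) Y.

Lemma M_inES : IES (mk (a ++ c) W (a ++ c)).
Proof.
  destruct (classic (nonempty W)) as [Hne|Hne].
  - rewrite mk_ne by auto. apply valid_inES.
    destruct hX as [_ [_ [BX _]]]. destruct hY as [LY [_ [BY SY]]].
    destruct Hne as [w [Hw1 Hw2]].
    split; [auto|]. split; [exists w; split; auto|]. split.
    + apply B_setI; auto. eapply B_rrel; eauto.
    + intros v [_ Hv]; auto.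
  - rewrite mk_e by auto. apply inES_zero.
Qed.

Lemma M_le_p : LE (mk (a ++ c) W (a ++ c)) (Tri a X a).
Proof.
  destruct (classic (nonempty W)) as [Hne|Hne].
  - rewrite mk_ne by auto. apply leS_char; auto. exists c; split; auto. intros v [h _]; auto.
  - rewrite mk_e by auto. apply le_zero_l.
Qed.

Lemma M_le_q : LE (mk (a ++ c) W (a ++ c)) (Tri (a ++ c) Y (a ++ c)).
Proof.
  destruct (classic (nonempty W)) as [Hne|Hne].
  - rewrite mk_ne by auto. apply leS_char; auto. exists nil; split; [rewrite app_nil_r; auto|].
    intros v [_ h]; apply rrel_nil; auto.
  - rewrite mk_e by auto. apply le_zero_l.
Qed.

Lemma M_glb g : IES g -> LE g (Tri a X a) -> LE g (Tri (a ++ c) Y (a ++ c)) ->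
  LE g (mk (a ++ c) W (a ++ c)).
Proof.
  intros Hg H1 H2. destruct (inES_cases _ Hg) as [->|[d [Z [-> [_ [HZ _]]]]]]; [apply le_zero_l|].
  destruct hX as [_ [_ [BX _]]]. destruct hY as [_ [_ [BY _]]].
  destruct (lb _ _ _ _ _ _ BX BY HZ H1 H2) as [e [Hd Hs]].
  destruct HZ as [z Hz]. pose proof (Hs z Hz) as h. apply rrel_ne in h.
  rewrite mk_ne by auto. apply leS_char; [exists z; auto|].
  exists e; split; [rewrite <- app_assoc; auto|auto].
Qed.
End MeetTri.

Lemma meet (p q : S) : IES p -> IES q ->
  IES (M p q) /\ LE (M p q) p /\ LE (M p q) q /\
  (forall g, IES g -> LE g p -> LE g q -> LE g (M p q)).
Proof.
  intros Hp Hq.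
  destruct (inES_cases _ Hp) as [->|[a [X [-> hX]]]].
  { assert (E0 : M Zero q = Zero) by (destruct q; reflexivity). rewrite E0.
    split; [apply inES_zero|]. split; [apply le_zero_l|]. split; [apply le_zero_l|].
    intros g _ H _; apply le_zero_r in H; subst; apply le_zero_l. }
  destruct (inES_cases _ Hq) as [->|[b [Y [-> hY]]]].
  { assert (E0 : M (Tri a X a) Zero = Zero) by reflexivity. rewrite E0.
    split; [apply inES_zero|]. split; [apply le_zero_l|]. split; [apply le_zero_l|].
    intros g _ _ H; apply le_zero_r in H; subst; apply le_zero_l. }
  destruct (classic (exists c, b = a ++ c)) as [[c Hc]|Hn1].
  { rewrite (mul_case1 _ _ _ _ _ Hc). subst b.
    split; [apply M_inES; auto|]. split; [apply M_le_p; auto|]. split; [apply M_le_q; auto|].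
    intros g Hg H1 H2; apply M_glb; auto. }
  destruct (classic (exists c, a = b ++ c)) as [[c Hc]|Hn2].
  { rewrite (mul_case2 _ _ _ _ _ Hc Hn1). subst a.
    split; [apply M_inES; auto|]. split; [apply M_le_q; auto|]. split; [apply M_le_p; auto|].
    intros g Hg H1 H2; apply M_glb; auto. }
  rewrite mul_case3 by auto.
  split; [apply inES_zero|]. split; [apply le_zero_l|]. split; [apply le_zero_l|].
  intros g Hg H1 H2. destruct (inES_cases _ Hg) as [->|[d [Z [-> [_ [HZ _]]]]]]; [apply le_zero_l|].
  exfalso. apply leS_char in H1; auto. apply leS_char in H2; auto.
  destruct H1 as [e1 [Hd1 _]]. destruct H2 as [e2 [Hd2 _]].
  rewrite Hd1 in Hd2. destruct (app_comp _ _ _ _ Hd2); auto.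
Qed.

Lemma dir1 (xi : S -> Prop) : is_ultrafilter rg src L B xi -> is_tight rg src L B xi.
Proof.
  intros [Hf Hmax]. split; auto. pose proof Hf as Hf'.
  destruct Hf' as (Hin & [x0 Hx0] & Hup & Hz & Hdir).
  assert (D : forall z, IES z -> ~ xi z -> exists y, xi y /\ M y z = Zero).
  { intros z Hzz Hnz. apply NNPP; intro Hno.
    assert (Hall : forall y, xi y -> M y z <> Zero) by (intros y Hy Heq; apply Hno; eauto).
    set (eta := fun u => IES u /\ exists y, xi y /\ LE (M y z) u).
    assert (Heta : is_filter rg src L B eta).
    { split; [intros u [h _]; auto|].
      split.
      { exists (M x0 z). split; [apply (meet _ _ (Hin _ Hx0) Hzz)|].
        exists x0; split; auto. apply le_refl. apply (meet _ _ (Hin _ Hx0) Hzz). }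
      split.
      { intros u u' [Hu [y [Hy Hle]]] Hu' Huu'. split; auto. exists y; split; auto.
        apply (le_trans _ u); auto. apply (meet _ _ (Hin _ Hy) Hzz). }
      split.
      { intros [_ [y [Hy Hle]]]. apply le_zero_r in Hle. exact (Hall y Hy Hle). }
      intros u1 u2 [Hu1 [y1 [Hy1 Hl1]]] [Hu2 [y2 [Hy2 Hl2]]].
      destruct (Hdir _ _ Hy1 Hy2) as [y3 [Hy3 [H31 H32]]].
      pose proof (meet _ _ (Hin _ Hy3) Hzz) as (m3 & m3l & m3r & _).
      pose proof (meet _ _ (Hin _ Hy1) Hzz) as (m1 & _ & _ & m1g).
      pose proof (meet _ _ (Hin _ Hy2) Hzz) as (m2 & _ & _ & m2g).
      exists (M y3 z). split; [split; auto; exists y3; split; auto; apply le_refl; auto|].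
      split.
      - apply (le_trans _ (M y1 z)); auto. apply m1g; auto.
        apply (le_trans _ y3); auto.
      - apply (le_trans _ (M y2 z)); auto. apply m2g; auto.
        apply (le_trans _ y3); auto. }
    apply Hnz. apply (Hmax eta Heta).
    - intros y Hy. split; [auto|]. exists y; split; auto. apply (meet _ _ (Hin _ Hy) Hzz).
    - split; auto. exists x0; split; auto. apply (meet _ _ (Hin _ Hx0) Hzz). }
  intros x Z Hx [HZ1 HZ2]. apply NNPP; intro Hno.
  assert (HZ : forall z, In z Z -> exists y, xi y /\ M y z = Zero).
  { intros z Hzin. apply D; [apply HZ1; auto|]. intro Hxz; apply Hno; eauto. }
  assert (Hw : exists w, xi w /\ LE w x /\ forall z, In z Z -> exists y, xi y /\ LE w y /\ M y z = Zero).
  { clear HZ1 HZ2 Hno. induction Z as [|z Z IH].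
    - exists x; split; auto. split; [apply le_refl; auto|]. intros z [].
    - destruct IH as [w' [Hw' [Hw'x Hw'Z]]]. { intros z' Hz'; apply HZ; simpl; auto. }
      destruct (HZ z (or_introl eq_refl)) as [y [Hy Hyz]].
      destruct (Hdir _ _ Hw' Hy) as [w [Hw [H1 H2]]].
      exists w; split; auto. split; [apply (le_trans _ w'); auto|].
      intros z' [<-|Hz'].
      + exists y; auto.
      + destruct (Hw'Z z' Hz') as [y' [Hy' [Hl Hy'z]]]. exists y'; split; auto. split; auto.
        apply (le_trans _ w'); auto. }
  destruct Hw as [w [Hw [Hwx HwZ]]].
  assert (Hwn : w <> Zero) by (intro; subst; auto).
  destruct (HZ2 w (Hin _ Hw) Hwn Hwx) as [z [Hzin Hzw]].
  destruct (HwZ z Hzin) as [y [Hy [Hwy Hyz]]].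
  assert (Hzi : IES z) by (apply HZ1; auto).
  pose proof (meet _ _ Hzi (Hin _ Hw)) as (mi & ml & mr & _).
  pose proof (meet _ _ (Hin _ Hy) Hzi) as (_ & _ & _ & g).
  apply Hzw. apply le_zero_r. rewrite <- Hyz. apply g; auto. apply (le_trans _ w); auto.
Qed.

Lemma sub_elem a X W : valid a X -> B W -> subset W X ->
  IES (mk a W a) /\ LE (mk a W a) (Tri a X a).
Proof.
  intros [H1 [H2 [H3 H4]]] HW Hs. destruct (classic (nonempty W)) as [Hne|Hne].
  - rewrite mk_ne by auto. split.
    + apply valid_inES. split; auto. split; auto. split; auto. intros v Hv; auto.
    + apply leS_char; auto. exists nil; split; [rewrite app_nil_r; auto|].
      intros v Hv; apply rrel_nil; auto.
  - rewrite mk_e by auto. split; [apply inES_zero|apply le_zero_l].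
Qed.

Lemma hit a W e1 Z v : RR W e1 v -> Z v -> M (mk a W a) (Tri (a ++ e1) Z (a ++ e1)) <> Zero.
Proof.
  intros H1 H2. pose proof (rrel_ne _ _ _ H1) as Hne. rewrite mk_ne by auto.
  rewrite (mul_case1 _ _ e1 _ _ eq_refl). rewrite mk_ne; [discriminate|].
  exists v; split; auto.
Qed.

Lemma dir2 (xi : S -> Prop) : infinite_type xi -> is_tight rg src L B xi -> is_ultrafilter rg src L B xi.
Proof.
  intros hinf [Hf Htight]. split; auto. pose proof Hf as Hf'.
  destruct Hf' as (Hin & [x0 Hx0] & Hup & Hz & Hdir).
  intros eta Heta Hsub e He. apply NNPP; intro Hne.
  destruct Heta as (Hin' & _ & _ & Hz' & Hdir').
  assert (D2 : exists y, xi y /\ forall g, IES g -> g <> Zero -> LE g y -> LE g e -> False).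
  { destruct (inES_cases _ (Hin' _ He)) as [He0|[b [Y [He0 hY]]]]; [subst; contradiction|].
    assert (Long : forall n, exists y, xi y /\ n <= length (word y)).
    { induction n as [|n [y [Hy Hn]]]; [exists x0; split; auto; apply le_0_n|].
      destruct (hinf y Hy) as [y' [Hy' Hl]]. exists y'; split; auto. lia. }
    destruct (Long (length b)) as [y [Hy Hly]].
    destruct (inES_cases _ (Hin _ Hy)) as [Hy0|[a [X [Hy0 hX]]]]; [subst; contradiction|].
    subst y e. simpl in Hly.
    destruct (classic (exists c, a = b ++ c)) as [[c Hc]|Hnc].
    2:{ exists (Tri a X a); split; auto. intros g Hg Hgn H1 H2.
        destruct (inES_cases _ Hg) as [->|[d [Z [-> [_ [HZ _]]]]]]; [auto|].
        apply leS_char in H1; auto. apply leS_char in H2; auto.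
        destruct H1 as [e1 [Hd1 _]]. destruct H2 as [e2 [Hd2 _]].
        rewrite Hd1 in Hd2. destruct (app_comp _ _ _ _ Hd2) as [[c Hc]|Hc]; [|auto].
        apply Hnc. exists nil. rewrite Hc in Hly |- *. rewrite length_app in Hly.
        destruct c; [rewrite !app_nil_r; auto|simpl in Hly; lia]. }
    subst a.
    destruct hX as (LX & NX & BX & SX). destruct hY as (LY & NY & BY & SY).
    set (W1 := setI (RR Y c) X).
    destruct (classic (nonempty W1)) as [HW1|HW1].
    2:{ exists (Tri (b ++ c) X (b ++ c)); split; auto. intros g Hg Hgn H1 H2.
        destruct (inES_cases _ Hg) as [->|[d [Z [-> [_ [HZ _]]]]]]; [auto|].
        destruct (lb _ _ _ _ _ _ BY BX HZ H2 H1) as [e' [_ Hs]].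
        destruct HZ as [z0 Hz0]. apply HW1. eapply rrel_ne. apply Hs; eauto. }
    assert (BR : B (RR Y c)) by (destruct HW1 as [w [Hw _]]; eapply B_rrel; eauto).
    set (W2 := setD X (RR Y c)).
    assert (BW1 : B W1) by (apply B_setI; auto).
    assert (BW2 : B W2) by (apply hcompl; auto).
    assert (hX : valid (b ++ c) X) by (repeat split; auto).
    destruct (sub_elem _ _ _ hX BW1 ltac:(intros v [_ h]; auto)) as [I1 L1].
    destruct (sub_elem _ _ _ hX BW2 ltac:(intros v [h _]; auto)) as [I2 L2].
    assert (Hcov : is_cover rg src L B (Tri (b ++ c) X (b ++ c))
                     [mk (b ++ c) W1 (b ++ c); mk (b ++ c) W2 (b ++ c)]).
    { split.
      - intros z [<-|[<-|[]]]; auto.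
      - intros g Hg Hgn Hle.
        destruct (inES_cases _ Hg) as [->|[d [Z [-> [_ [HZ _]]]]]]; [contradiction|].
        apply leS_char in Hle; auto. destruct Hle as [e1 [-> Hs]].
        destruct HZ as [v Hv]. pose proof (Hs v Hv) as [u [p [Hu [Hp Hm]]]].
        destruct (classic (RR Y c u)) as [HR|HR].
        + exists (mk (b ++ c) W1 (b ++ c)); split; [simpl; auto|].
          eapply hit; [|exact Hv]. exists u, p; split; [split; auto|auto].
        + exists (mk (b ++ c) W2 (b ++ c)); split; [simpl; auto|].
          eapply hit; [|exact Hv]. exists u, p; split; [split; auto|auto]. }
    destruct (Htight _ _ Hy Hcov) as [z [Hzin Hxz]].
    destruct Hzin as [<-|[<-|[]]].
    - exfalso. apply Hne. rewrite mk_ne in Hxz by auto.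
      apply (Hup _ _ Hxz (valid_inES _ _ (conj LY (conj NY (conj BY SY))))).
      apply leS_char; auto. exists c; split; auto. intros v [h _]; auto.
    - destruct (classic (nonempty W2)) as [HW2|HW2]; [|rewrite mk_e in Hxz by auto; contradiction].
      rewrite mk_ne in Hxz by auto.
      exists (Tri (b ++ c) W2 (b ++ c)); split; auto. intros g Hg Hgn H1 H2.
      destruct (inES_cases _ Hg) as [->|[d [Z [-> [_ [HZ _]]]]]]; [auto|].
      destruct (lb _ _ _ _ _ _ BY BW2 HZ H2 H1) as [e' [_ Hs]].
      destruct HZ as [z0 Hz0]. destruct (rrel_ne _ _ _ (Hs z0 Hz0)) as [w [Hw1 [_ Hw2]]]. auto. }
  destruct D2 as [y [Hy Hdisj]].
  destruct (Hdir' _ _ (Hsub _ Hy) He) as [g [Hg [H1 H2]]].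
  apply (Hdisj g); auto. intro; subst; auto.
Qed.

End Proof.

Theorem mainTheorem16
  (V E Alph : Type) (rg src : E -> V) (L : E -> Alph)
  (B : (V -> Prop) -> Prop)
  (hVc : countable V) (hVne : inhabited V) (hEc : countable E)
  (hL : forall a : Alph, exists e : E, L e = a)
  (hacc : accommodating rg src L B)
  (hwlr : weakly_left_resolving rg src L B)
  (hcompl : closed_under_relative_complements B)
  (xi : @Sg V Alph -> Prop)
  (hxi : is_filter rg src L B xi)
  (hinf : infinite_type xi) :
  is_tight rg src L B xi <-> is_ultrafilter rg src L B xi.
Proof.
  split.
  - intro H. eapply dir2; eauto.
  - intro H. eapply dir1; eauto.
Qed.
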